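(* Let $Q$ be a quantale, $M$ a $Q$-module, $\mathcal{B}\in\operatorname{mF}(Q)$ binormal over $M$ and $\mathcal{F}\in\operatorname{mF}(Q)$ 1-step over $M$. Then $\mathcal{B}+\mathcal{F}$ is 1-step over $M$.
   Context: A quantale is a poset $Q$ with all nonempty joins $\sum$ (no bottom required), top $1$, commutative associative multiplication with unit $1$ distributing over nonempty joins; a $Q$-module is a poset $M$ with all nonempty joins and an associative unital action distributing over nonempty joins in each variable. An m-filter is a subset of $Q$ containing $1$, upward closed and closed under multiplication; $\mathcal{B}+\mathcal{F}$ is the smallest m-filter containing $\mathcal{B}\cup\mathcal{F}$. Write $x\le^*\sum_ix_i$ if $x\le\sum_{i\in I_0}x_i$ for some finite nonempty $I_0$. For $a,b\in M$: $a\preceq^1_\mathcal{F}b$ means there are families $(a_i)$ in $M$, $(s_i)$ in $\mathcal{F}$ with $a\le\sum a_i$ and $s_ia_i\le b$; $a\preceq^n_\mathcal{F}b$ means a chain of $n$ such steps; $a\preceq_\mathcal{F}b$ means $a\preceq^n_\mathcal{F}b$ for some $n\ge1$. $\mathcal{F}$ is localizable over $M$ if for each $b$ there is $n_b$ with $a\preceq_\mathcal{F}b\Rightarrow a\preceq^{n_b}_\mathcal{F}b$; 1-step over $M$ if localizable and $a\preceq_\mathcal{F}b\Rightarrow a\preceq^1_\mathcal{F}b$. $\mathcal{N}$ is normal over $M$ if for all $s\in\mathcal{N}$, $m\in M$, families $(m_i)$ with $sm\le\sum_im_i$, there exist families $(m'_j)$ in $M$, $(s_j)$ in $\mathcal{N}$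 with $m\le\sum_jm'_j$ and $s_jm'_j\le^*\sum_im_i$. $\mathcal{C}$ is conormal over $M$ if for all $m,n\in M$ with $m\preceq^1_\mathcal{C}n$ there is $s\in\mathcal{C}$ with $sm\le n$. $\mathcal{B}$ is binormal over $M$ if it is both normal and conormal over $M$. *)

(* Defs.v *)
From Stdlib Require Import List.
Set Implicit Arguments.

(* A quantale: poset with all nonempty joins (given as a join operator on
   subsets, only constrained on nonempty subsets), top element 1 which is
   the unit of a commutative associative multiplication distributing over
   nonempty joins. *)
Record Quantale := {
  qcar :> Type;
  qle : qcar -> qcar -> Prop;
  qle_refl : forall x, qle x x;
  qle_antisym : forall x y, qle x y -> qle y x -> x = y;
  qle_trans : forall x y z, qle x y -> qle y z -> qle x z;
  qsup : (qcar -> Prop) -> qcar;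
  qsup_ub : forall (S : qcar -> Prop) x, S x -> qle x (qsup S);
  qsup_least : forall (S : qcar -> Prop) y, (exists x, S x) ->
      (forall x, S x -> qle x y) -> qle (qsup S) y;
  qone : qcar;
  qone_top : forall x, qle x qone;
  qmul : qcar -> qcar -> qcar;
  qmul_comm : forall x y, qmul x y = qmul y x;
  qmul_assoc : forall x y z, qmul x (qmul y z) = qmul (qmul x y) z;
  qmul_1l : forall x, qmul qone x = x;
  qmul_sup : forall a (S : qcar -> Prop), (exists x, S x) ->
      qmul a (qsup S) = qsup (fun y => exists x, S x /\ y = qmul a x)
}.

Record QModule (Q : Quantale) := {
  mcar :> Type;
  mle : mcar -> mcar -> Prop;
  mle_refl : forall x, mle x x;
  mle_antisym : forall x y, mle x y -> mle y x -> x = y;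
  mle_trans : forall x y z, mle x y -> mle y z -> mle x z;
  msup : (mcar -> Prop) -> mcar;
  msup_ub : forall (S : mcar -> Prop) x, S x -> mle x (msup S);
  msup_least : forall (S : mcar -> Prop) y, (exists x, S x) ->
      (forall x, S x -> mle x y) -> mle (msup S) y;
  act : qcar Q -> mcar -> mcar;
  act_assoc : forall s t m, act (qmul Q s t) m = act s (act t m);
  act_1 : forall m, act (qone Q) m = m;
  act_supl : forall (S : qcar Q -> Prop) m, (exists x, S x) ->
      act (qsup Q S) m = msup (fun y => exists s, S s /\ y = act s m);
  act_supr : forall s (T : mcar -> Prop), (exists x, T x) ->
      act s (msup T) = msup (fun y => exists t, T t /\ y = act s t)
}.

Section Defs.
Variable Q : Quantale.

Definition is_mfilter (F : Q -> Prop) : Prop :=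
  F (qone Q) /\
  (forall x y, F x -> qle Q x y -> F y) /\
  (forall x y, F x -> F y -> F (qmul Q x y)).

Definition mfilter_sum (B F : Q -> Prop) : Q -> Prop :=
  fun x => forall G, is_mfilter G -> (forall y, B y \/ F y -> G y) -> G x.

Variable M : QModule Q.

Definition famsup (I : Type) (m : I -> M) : M :=
  msup M (fun y => exists i, m i = y).

Definition le_star (x : M) (I : Type) (m : I -> M) : Prop :=
  exists l : list I, l <> nil /\
    mle M x (msup M (fun y => exists i, In i l /\ m i = y)).

Definition prec1 (F : Q -> Prop) (a b : M) : Prop :=
  exists (I : Type) (ai : I -> M) (si : I -> Q),
    inhabited I /\ mle M a (famsup ai) /\
    (forall i, F (si i)) /\ (forall i, mle M (act M (si i) (ai i)) b).

Fixpoint precn (F : Q -> Prop) (n : nat) (a b : M) : Prop :=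
  match n with
  | O => a = b
  | S k => exists c, prec1 F a c /\ precn F k c b
  end.

Definition prec (F : Q -> Prop) (a b : M) : Prop :=
  exists n, 1 <= n /\ precn F n a b.

Definition localizable (F : Q -> Prop) : Prop :=
  forall b : M, exists nb, 1 <= nb /\ forall a, prec F a b -> precn F nb a b.

Definition one_step (F : Q -> Prop) : Prop :=
  localizable F /\ forall a b, prec F a b -> prec1 F a b.

Definition normal (N : Q -> Prop) : Prop :=
  forall (s : Q) (m : M) (I : Type) (mi : I -> M),
    inhabited I -> N s -> mle M (act M s m) (famsup mi) ->
    exists (J : Type) (m' : J -> M) (sj : J -> Q),
      inhabited J /\ mle M m (famsup m') /\
      (forall j, N (sj j)) /\ (forall j, le_star (act M (sj j) (m' j)) mi).

Definition conormal (C : Q -> Prop) : Prop :=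
  forall m n : M, prec1 C m n -> exists s, C s /\ mle M (act M s m) n.

Definition binormal (B : Q -> Prop) : Prop := normal B /\ conormal B.

End Defs.

(* Main.v *)
Require Import Defs.
From Stdlib Require Import List ClassicalEpsilon.
Arguments is_mfilter {Q} F.
Arguments mfilter_sum {Q} B F _.

Lemma msup_pair {Q : Quantale} (M : QModule Q) (m n : M) : mle M m n ->
  msup M (fun z => z = m \/ z = n) = n.
Proof. intros H. apply mle_antisym.
 - apply msup_least. exists n; auto. intros x [-> | ->]; auto. apply mle_refl.
 - apply msup_ub; auto. Qed.

Lemma qsup_pair (Q : Quantale) (m n : Q) : qle Q m n ->
  qsup Q (fun z => z = m \/ z = n) = n.
Proof. intros H. apply qle_antisym.
 - apply qsup_least. exists n; auto. intros x [-> | ->]; auto. apply qle_refl.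
 - apply qsup_ub; auto. Qed.

Lemma act_mono_r {Q : Quantale} (M : QModule Q) s (m n : M) :
  mle M m n -> mle M (act M s m) (act M s n).
Proof. intros H. rewrite <- (msup_pair M m n H).
  rewrite act_supr by (exists n; auto).
  apply msup_ub. exists m. split; auto. Qed.

Lemma act_mono_l {Q : Quantale} (M : QModule Q) s t (m : M) :
  qle Q s t -> mle M (act M s m) (act M t m).
Proof. intros H. rewrite <- (qsup_pair Q s t H).
  rewrite act_supl by (exists t; auto).
  apply msup_ub. exists s. split; auto. Qed.

Lemma qmul_mono_r (Q : Quantale) (x y z : Q) :
  qle Q y z -> qle Q (qmul Q x y) (qmul Q x z).
Proof. intros H. rewrite <- (qsup_pair Q y z H).
  rewrite qmul_sup by (exists z; auto).
  apply qsup_ub. exists y. split; auto. Qed.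

Lemma qmul_mono (Q : Quantale) (a b c d : Q) :
  qle Q a b -> qle Q c d -> qle Q (qmul Q a c) (qmul Q b d).
Proof. intros H1 H2. apply qle_trans with (qmul Q a d).
  apply qmul_mono_r; auto.
  rewrite (qmul_comm Q a), (qmul_comm Q b). apply qmul_mono_r; auto. Qed.

Lemma qmul_le_l (Q : Quantale) (x y : Q) : qle Q (qmul Q x y) x.
Proof. apply qle_trans with (qmul Q x (qone Q)).
  apply qmul_mono_r, qone_top. rewrite qmul_comm, qmul_1l. apply qle_refl. Qed.

Lemma le_famsup {Q : Quantale} (M : QModule Q) I (m : I -> M) i :
  mle M (m i) (famsup M m).
Proof. apply msup_ub. exists i; auto. Qed.

Lemma sum_char (Q : Quantale) (B F : Q -> Prop) x : is_mfilter B -> is_mfilter F ->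
  mfilter_sum B F x <-> exists b f, B b /\ F f /\ qle Q (qmul Q b f) x.
Proof.
  intros [B1 [Bup Bmul]] [F1 [Fup Fmul]]. split.
  - intros H. apply H.
    + split; [|split].
      * exists (qone Q), (qone Q). repeat split; auto. apply qone_top.
      * intros u v [b [f [Hb [Hf Hl]]]] Huv. exists b, f. repeat split; auto.
        eapply qle_trans; eauto.
      * intros u v [b [f [Hb [Hf Hl]]]] [b' [f' [Hb' [Hf' Hl']]]].
        exists (qmul Q b b'), (qmul Q f f'). repeat split; auto.
        replace (qmul Q (qmul Q b b') (qmul Q f f')) with
          (qmul Q (qmul Q b f) (qmul Q b' f')).
        apply qmul_mono; auto.
        rewrite <- !qmul_assoc. f_equal.
        rewrite !qmul_assoc. f_equal. apply qmul_comm.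
    + intros y [Hy | Hy].
      * exists y, (qone Q). repeat split; auto. apply qmul_le_l.
      * exists (qone Q), y. repeat split; auto. rewrite qmul_1l. apply qle_refl.
  - intros [b [f [Hb [Hf Hl]]]] G [G1 [Gup Gmul]] HBF.
    apply Gup with (qmul Q b f); auto.
Qed.

Fixpoint fprod {Q : Quantale} {I : Type} (f : I -> Q) (l : list I) : Q :=
  match l with nil => qone Q | i :: l => qmul Q (f i) (fprod f l) end.

Lemma fprod_F {Q : Quantale} {I : Type} (F : Q -> Prop) (f : I -> Q) l :
  is_mfilter F -> (forall i, F (f i)) -> F (fprod f l).
Proof. intros [F1 [Fup Fmul]] H. induction l; simpl; auto. Qed.

Lemma fprod_le {Q : Quantale} {I : Type} (f : I -> Q) l i :
  In i l -> qle Q (fprod f l) (f i).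
Proof. induction l as [|j l IH]; simpl; [tauto|]. intros [-> | Hi].
  apply qmul_le_l.
  rewrite qmul_comm. eapply qle_trans; [apply qmul_le_l|]. auto. Qed.

Lemma prec1_compose {Q : Quantale} (M : QModule Q) (B F : Q -> Prop) a c b :
  is_mfilter B -> is_mfilter F -> conormal M B ->
  prec1 M F a c -> prec1 M B c b -> prec1 M (mfilter_sum B F) a b.
Proof.
  intros HB HF Hc H1 H2. destruct (Hc _ _ H2) as [s [Bs Hs]].
  destruct H1 as [I [ai [si [inh [Ha [HFs Hle]]]]]].
  exists I, ai, (fun i => qmul Q s (si i)). split; [exact inh|]. repeat split; auto.
  - intros i. apply sum_char; auto. exists s, (si i). repeat split; auto. apply qle_refl.
  - intros i. rewrite act_assoc. eapply mle_trans; [|exact Hs]. apply act_mono_r; auto.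
Qed.

Lemma prec1_trans_B {Q : Quantale} (M : QModule Q) (B : Q -> Prop) a c b :
  is_mfilter B -> conormal M B ->
  prec1 M B a c -> prec1 M B c b -> prec1 M B a b.
Proof.
  intros [B1 [Bup Bmul]] Hc H1 H2. destruct (Hc _ _ H2) as [s [Bs Hs]].
  destruct H1 as [I [ai [si [inh [Ha [HFs Hle]]]]]].
  exists I, ai, (fun i => qmul Q s (si i)). split; [exact inh|]. repeat split; auto.
  - intros i. rewrite act_assoc. eapply mle_trans; [|exact Hs]. apply act_mono_r; auto.
Qed.

Lemma prec1_refl {Q : Quantale} (M : QModule Q) (B : Q -> Prop) a :
  is_mfilter B -> prec1 M B a a.
Proof.
  intros [B1 _]. exists unit, (fun _ => a), (fun _ => qone Q). split; [exact (inhabits tt)|]. repeat split; auto.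
  - apply (le_famsup M unit (fun _ => a) tt).
  - intros _. rewrite act_1. apply mle_refl.
Qed.

Lemma prec1_split {Q : Quantale} (M : QModule Q) (B F : Q -> Prop) a b :
  is_mfilter B -> is_mfilter F ->
  prec1 M (mfilter_sum B F) a b -> exists c, prec1 M F a c /\ prec1 M B c b.
Proof.
  intros HB HF [I [ai [si [inh [Ha [Hs Hle]]]]]].
  assert (Hch: forall i, {p : Q * Q | B (fst p) /\ F (snd p) /\
     qle Q (qmul Q (fst p) (snd p)) (si i)}).
  { intros i. apply constructive_indefinite_description.
    destruct (proj1 (sum_char Q B F _ HB HF) (Hs i)) as [b0 [f0 H]].
    exists (b0, f0). exact H. }
  set (bi := fun i => fst (proj1_sig (Hch i))).
  set (fi := fun i => snd (proj1_sig (Hch i))).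
  exists (famsup M (fun i => act M (fi i) (ai i))). split.
  - exists I, ai, fi. split; [exact inh|]. repeat split; auto.
    + intros i. unfold fi. destruct (Hch i) as [p Hp]; simpl; tauto.
    + intros i. apply (le_famsup M I (fun i => act M (fi i) (ai i)) i).
  - exists I, (fun i => act M (fi i) (ai i)), bi. split; [exact inh|]. repeat split; auto.
    + apply mle_refl.
    + intros i. unfold bi. destruct (Hch i) as [p Hp]; simpl; tauto.
    + intros i. rewrite <- act_assoc. eapply mle_trans; [|apply (Hle i)].
      apply act_mono_l. unfold bi, fi. destruct (Hch i) as [p Hp]; simpl; tauto.
Qed.

Lemma swap1 {Q : Quantale} (M : QModule Q) (B F : Q -> Prop) y x d :
  is_mfilter F -> normal M B -> conormal M B ->
  prec1 M B y x -> prec1 M F x d -> exists e, prec1 M F y e /\ prec1 M B e d.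
Proof.
  intros HF Hn Hc H1 H2. destruct (Hc _ _ H1) as [s [Bs Hs]].
  destruct H2 as [I [ci [fi [inh [Hci [HFi Hle]]]]]].
  destruct (Hn s y I ci inh Bs (mle_trans _ _ _ _ Hs Hci))
    as [J [m' [sj [inhJ [Hy [HBj Hstar]]]]]].
  assert (Hch : forall j, {l : list I | l <> nil /\
     mle M (act M (sj j) (m' j)) (msup M (fun z => exists i, In i l /\ ci i = z))}).
  { intros j. apply constructive_indefinite_description. apply Hstar. }
  set (g := fun j => fprod fi (proj1_sig (Hch j))).
  exists (famsup M (fun j => act M (g j) (m' j))). split.
  - exists J, m', g. split; [exact inhJ|]. repeat split; auto.
    + intros j. apply fprod_F; auto.
    + intros j. apply (le_famsup M J (fun j => act M (g j) (m' j)) j).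
  - exists J, (fun j => act M (g j) (m' j)), sj. split; [exact inhJ|]. repeat split; auto.
    + apply mle_refl.
    + intros j. rewrite <- act_assoc, qmul_comm, act_assoc.
      unfold g. destruct (Hch j) as [l [Hl Hle2]]. simpl.
      assert (Hne : exists z, (fun z => exists i, In i l /\ ci i = z) z).
      { destruct l as [|i0 l]; [congruence|]. exists (ci i0), i0. simpl; auto. }
      eapply mle_trans; [apply act_mono_r; exact Hle2|].
      rewrite act_supr by exact Hne.
      apply msup_least.
      { destruct Hne as [z Hz]. exists (act M (fprod fi l) z), z. auto. }
      intros w [t [[i [Hi <-]] ->]].
      eapply mle_trans; [|apply (Hle i)]. apply act_mono_l. apply fprod_le; auto.
Qed.

Lemma swapn {Q : Quantale} (M : QModule Q) (B F : Q -> Prop) k :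
  is_mfilter F -> normal M B -> conormal M B ->
  forall y x c, prec1 M B y x -> precn M F k x c ->
  exists z, precn M F k y z /\ prec1 M B z c.
Proof.
  intros HF Hn Hc. induction k as [|k IH]; intros y x c H1 H2; simpl in *.
  - subst. exists y. auto.
  - destruct H2 as [x1 [Hx1 Hk]].
    destruct (swap1 M B F y x x1 HF Hn Hc H1 Hx1) as [w [Hw1 Hw2]].
    destruct (IH w x1 c Hw2 Hk) as [z [Hz1 Hz2]].
    exists z. split; auto. exists w. auto.
Qed.

Lemma chain {Q : Quantale} (M : QModule Q) (B F : Q -> Prop) :
  is_mfilter B -> is_mfilter F -> normal M B -> conormal M B ->
  forall n a b, precn M (mfilter_sum B F) n a b ->
  exists c, precn M F n a c /\ prec1 M B c b.
Proof.
  intros HB HF Hn Hc. induction n as [|k IH]; intros a b H; simpl in *.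
  - subst. exists b. split; auto. apply prec1_refl; auto.
  - destruct H as [x [Hax Hk]].
    destruct (IH _ _ Hk) as [c [Hxc Hcb]].
    destruct (prec1_split M B F a x HB HF Hax) as [y [Hay Hyx]].
    destruct (swapn M B F k HF Hn Hc y x c Hyx Hxc) as [z [Hyz Hzc]].
    exists z. split.
    + exists y. auto.
    + eapply prec1_trans_B; eauto.
Qed.

Theorem mainTheorem14 (Q : Quantale) (M : QModule Q) (B F : Q -> Prop) :
  @is_mfilter Q B -> @is_mfilter Q F ->
  @binormal Q M B -> @one_step Q M F ->
  @one_step Q M (@mfilter_sum Q B F).
Proof.
  intros HB HF [Bn Bc] [Floc F1].
  assert (H1 : forall a b, prec M (mfilter_sum B F) a b -> prec1 M (mfilter_sum B F) a b).
  { intros a b [n [Hn Hp]]. destruct (chain M B F HB HF Bn Bc n a b Hp) as [c [HFc HBc]].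
    apply prec1_compose with c; auto. apply F1. exists n; auto. }
  split; auto. intros b. exists 1. split; auto. intros a Ha. simpl. exists b. split; auto.
Qed.
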